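(* Let $\mathcal A$ be an additive category and let $\mathcal J_1,\mathcal J_2$ be ideals of $\mathcal A$. If $\mathcal J_1$ and $\mathcal J_2$ are both preenveloping, then so is $\mathcal J_1+\mathcal J_2$. Likewise, if $\mathcal J_1$ and $\mathcal J_2$ are both precovering, then so is $\mathcal J_1+\mathcal J_2$.
   Context: An ideal $\mathcal J$ of an additive category $\mathcal A$ assigns to each pair of objects $(A,B)$ a subgroup $\mathcal J(A,B)\subseteq \mathrm{Hom}(A,B)$ such that $fgh\in\mathcal J$ whenever $g\in\mathcal J$ and $f,h$ are arbitrary composable morphisms. The sum $\mathcal J_1+\mathcal J_2$ is given by $(\mathcal J_1+\mathcal J_2)(A,B)=\mathcal J_1(A,B)+\mathcal J_2(A,B)$. An ideal $\mathcal J$ is preenveloping if for every object $B$ there is a morphism $j:B\to J$ in $\mathcal J$ such that every morphism $j':B\to J'$ in $\mathcal J$ factors as $j'=gj$ for some $g:J\to J'$ (such $j$ is a $\mathcal J$-preenvelope). Dually, $\mathcal I$ is precovering if every object $A$ admits $i:I\to A$ in $\mathcal I$ through which every morphism $I'\to A$ in $\mathcal I$ factors. *)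

(* Defs.v *)
From HB Require Import structures.
From mathcomp Require Import all_boot all_order all_algebra.
Set Implicit Arguments. Unset Strict Implicit. Unset Printing Implicit Defensive.
Import GRing.Theory.
Local Open Scope ring_scope.

Record addCat := AddCat {
  Obj : Type;
  Hom : Obj -> Obj -> zmodType;
  comp : forall A B C : Obj, Hom B C -> Hom A B -> Hom A C;
  idm : forall A : Obj, Hom A A;
  compA : forall (A B C D : Obj) (f : Hom C D) (g : Hom B C) (h : Hom A B),
      comp f (comp g h) = comp (comp f g) h;
  comp1l : forall (A B : Obj) (f : Hom A B), comp (idm B) f = f;
  comp1r : forall (A B : Obj) (f : Hom A B), comp f (idm A) = f;
  compDl : forall (A B C : Obj) (f g : Hom B C) (h : Hom A B),
      comp (f + g) h = comp f h + comp g h;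
  compDr : forall (A B C : Obj) (f : Hom B C) (g h : Hom A B),
      comp f (g + h) = comp f g + comp f h;
  zobj : Obj;
  zobj_initial : forall (A : Obj) (f g : Hom zobj A), f = g;
  zobj_terminal : forall (A : Obj) (f g : Hom A zobj), f = g;
  biprod : Obj -> Obj -> Obj;
  bi_in1 : forall A B : Obj, Hom A (biprod A B);
  bi_in2 : forall A B : Obj, Hom B (biprod A B);
  bi_pr1 : forall A B : Obj, Hom (biprod A B) A;
  bi_pr2 : forall A B : Obj, Hom (biprod A B) B;
  bi_pr1in1 : forall A B : Obj, comp (bi_pr1 A B) (bi_in1 A B) = idm A;
  bi_pr2in2 : forall A B : Obj, comp (bi_pr2 A B) (bi_in2 A B) = idm B;
  bi_pr1in2 : forall A B : Obj, comp (bi_pr1 A B) (bi_in2 A B) = 0;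
  bi_pr2in1 : forall A B : Obj, comp (bi_pr2 A B) (bi_in1 A B) = 0;
  bi_sum : forall A B : Obj,
      comp (bi_in1 A B) (bi_pr1 A B) + comp (bi_in2 A B) (bi_pr2 A B)
      = idm (biprod A B)
}.

Arguments comp {a A B C} _ _.
Arguments idm {a} A.

Definition morclass (C : addCat) := forall A B : Obj C, Hom A B -> Prop.

Definition is_ideal (C : addCat) (J : morclass C) : Prop :=
  (forall A B : Obj C, J A B 0) /\
  (forall (A B : Obj C) (f g : Hom A B), J A B f -> J A B g -> J A B (f - g)) /\
  (forall (A B B' A' : Obj C) (f : Hom B' A') (g : Hom B B') (h : Hom A B),
      J B B' g -> J A A' (comp f (comp g h))).

Definition ideal_sum (C : addCat) (J1 J2 : morclass C) : morclass C :=
  fun A B f => exists g1 g2, J1 A B g1 /\ J2 A B g2 /\ f = g1 + g2.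

Definition preenvelope (C : addCat) (J : morclass C) (B E : Obj C)
  (j : Hom B E) : Prop :=
  J B E j /\ forall (E' : Obj C) (j' : Hom B E'), J B E' j' ->
    exists g : Hom E E', j' = comp g j.

Definition preenveloping (C : addCat) (J : morclass C) : Prop :=
  forall B : Obj C, exists (E : Obj C) (j : Hom B E), preenvelope J j.

Definition precover (C : addCat) (J : morclass C) (I A : Obj C)
  (i : Hom I A) : Prop :=
  J I A i /\ forall (I' : Obj C) (i' : Hom I' A), J I' A i' ->
    exists g : Hom I' I, i' = comp i g.

Definition precovering (C : addCat) (J : morclass C) : Prop :=
  forall A : Obj C, exists (I : Obj C) (i : Hom I A), precover J i.

(* Main.v *)
Require Import Defs.
From mathcomp Require Import all_boot all_order all_algebra.
Import GRing.Theory.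
Local Open Scope ring_scope.

Section H.
Variable C : addCat.

Lemma comp0r (A B D : Obj C) (f : Defs.Hom B D) : Defs.comp f (0 : Defs.Hom A B) = 0.
Proof.
have := Defs.compDr f (0 : Defs.Hom A B) 0; rewrite addr0.
by move/(congr1 (fun x => x - Defs.comp f 0)) => /=; rewrite addrK subrr => <-.
Qed.

Lemma comp0l (A B D : Obj C) (f : Defs.Hom A B) : Defs.comp (0 : Defs.Hom B D) f = 0.
Proof.
have := Defs.compDl (0 : Defs.Hom B D) 0 f; rewrite addr0.
by move/(congr1 (fun x => x - Defs.comp 0 f)) => /=; rewrite addrK subrr => <-.
Qed.

Lemma ideal_l (J : morclass C) : is_ideal J ->
  forall (A B D : Obj C) (f : Defs.Hom B D) (g : Defs.Hom A B), J A B g -> J A D (Defs.comp f g).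
Proof.
move=> [_ [_ H]] A B D f g Jg.
by have := H A A B D f g (idm A) Jg; rewrite Defs.comp1r.
Qed.

Lemma ideal_r (J : morclass C) : is_ideal J ->
  forall (A B D : Obj C) (g : Defs.Hom B D) (h : Defs.Hom A B), J B D g -> J A D (Defs.comp g h).
Proof.
move=> [_ [_ H]] A B D g h Jg.
by have := H A B D D (idm D) g h Jg; rewrite Defs.comp1l.
Qed.
End H.

Theorem proposition2p1 (C : addCat) (J1 J2 : morclass C) :
  is_ideal J1 -> is_ideal J2 ->
  (preenveloping J1 -> preenveloping J2 -> preenveloping (ideal_sum J1 J2)) /\
  (precovering J1 -> precovering J2 -> precovering (ideal_sum J1 J2)).
Proof.
move=> I1 I2; split.
- move=> P1 P2 B.
  have [E1 [j1 [Jj1 U1]]] := P1 B.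
  have [E2 [j2 [Jj2 U2]]] := P2 B.
  exists (biprod E1 E2), (Defs.comp (bi_in1 E1 E2) j1 + Defs.comp (bi_in2 E1 E2) j2).
  split.
    exists (Defs.comp (bi_in1 E1 E2) j1), (Defs.comp (bi_in2 E1 E2) j2).
    by split; [apply: ideal_l|split; [apply: ideal_l|]].
  move=> E' j' [g1 [g2 [Jg1 [Jg2 ->]]]].
  have [h1 ->] := U1 _ _ Jg1.
  have [h2 ->] := U2 _ _ Jg2.
  exists (Defs.comp h1 (bi_pr1 E1 E2) + Defs.comp h2 (bi_pr2 E1 E2)).
  rewrite Defs.compDl !Defs.compDr -!Defs.compA !(Defs.compA (bi_pr1 E1 E2)) !(Defs.compA (bi_pr2 E1 E2)).
  by rewrite bi_pr1in1 bi_pr1in2 bi_pr2in1 bi_pr2in2 !comp0l !comp0r !Defs.comp1l addr0 add0r.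
- move=> P1 P2 A.
  have [E1 [j1 [Jj1 U1]]] := P1 A.
  have [E2 [j2 [Jj2 U2]]] := P2 A.
  exists (biprod E1 E2), (Defs.comp j1 (bi_pr1 E1 E2) + Defs.comp j2 (bi_pr2 E1 E2)).
  split.
    exists (Defs.comp j1 (bi_pr1 E1 E2)), (Defs.comp j2 (bi_pr2 E1 E2)).
    by split; [apply: ideal_r|split; [apply: ideal_r|]].
  move=> E' j' [g1 [g2 [Jg1 [Jg2 ->]]]].
  have [h1 ->] := U1 _ _ Jg1.
  have [h2 ->] := U2 _ _ Jg2.
  exists (Defs.comp (bi_in1 E1 E2) h1 + Defs.comp (bi_in2 E1 E2) h2).
  rewrite Defs.compDr !Defs.compDl !Defs.compA -!(Defs.compA j1) -!(Defs.compA j2).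
  by rewrite bi_pr1in1 bi_pr1in2 bi_pr2in1 bi_pr2in2 !comp0l !comp0r !Defs.comp1l ?Defs.comp1r addr0 add0r.
Qed.
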